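(* Let $t\le 1$ and let $M\in\mathbb{R}^{n\times n}$ be a distance matrix (i.e. $M_{ij}\ge 0$, $M_{ii}=0$, $M_{ij}=M_{ji}$, $M_{ik}\le M_{ij}+M_{jk}$ for all $i,j,k$). Let $\bar M=\sum_{i,j}M_{ij}$. Then for all $\tilde x,\tilde y,\tilde z\in\tilde\Delta_n$, $$\big(\tilde d^t_M(\tilde x,\tilde z)\big)^{2-t}\le \bar M^{\,1-t}\Big(\tilde d^t_M(\tilde x,\tilde y)+\tilde d^t_M(\tilde y,\tilde z)\Big).$$
   Context: $t^*=1/(2-t)$. All powers of vectors and matrices are entrywise. The co-simplex is $\tilde\Delta_n=\{\tilde p\in\mathbb{R}^n:\tilde p\ge 0,\ \sum_i \tilde p_i^{1/t^*}=1\}$. For $\tilde r,\tilde c\in\tilde\Delta_n$, the co-polytope is $\tilde U_n(\tilde r,\tilde c)=\{\tilde P\in\mathbb{R}_{\ge0}^{n\times n}: \sum_j\tilde P_{ij}^{1/t^*}=\tilde r_i^{1/t^*}\ \forall i,\ \sum_i\tilde P_{ij}^{1/t^*}=\tilde c_j^{1/t^*}\ \forall j\}$. $\langle A,B\rangle=\sum_{ij}A_{ij}B_{ij}$. The (unregularized) measured cost is $\tilde d^t_M(\tilde r,\tilde c)=\min_{\tilde P\in\tilde U_n(\tilde r,\tilde c)}\langle\tilde P,M\rangle$. *)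

(* Defs.v *)
From HB Require Import structures.
From mathcomp Require Import all_boot all_order all_algebra.
From mathcomp Require Import all_classical all_reals.
From mathcomp Require Import exp.
Set Implicit Arguments. Unset Strict Implicit. Unset Printing Implicit Defensive.
Import Order.TTheory GRing.Theory Num.Theory.
Local Open Scope ring_scope.
Local Open Scope classical_set_scope.

Section Defs.
Variable R : realType.

Definition tstar (t : R) : R := 1 / (2 - t).

Definition co_simplex (t : R) {n : nat} : set ('I_n -> R) :=
  [set p | (forall i, 0 <= p i) /\ \sum_(i < n) p i `^ (1 / tstar t) = 1].

Definition co_polytope (t : R) (n : nat) (r c : 'I_n -> R) : set 'M[R]_n :=
  [set P | (forall i j, 0 <= P i j) /\
           (forall i, \sum_(j < n) P i j `^ (1 / tstar t) = r i `^ (1 / tstar t)) /\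
           (forall j, \sum_(i < n) P i j `^ (1 / tstar t) = c j `^ (1 / tstar t))].

Definition frob (n : nat) (A B : 'M[R]_n) : R := \sum_(i < n) \sum_(j < n) A i j * B i j.

(* unregularized measured cost: min over the co-polytope (taken as inf) *)
Definition measured_cost (t : R) (n : nat) (M : 'M[R]_n) (r c : 'I_n -> R) : R :=
  inf [set frob P M | P in co_polytope t r c].

Definition is_distance_matrix (n : nat) (M : 'M[R]_n) : Prop :=
  (forall i j, 0 <= M i j) /\ (forall i, M i i = 0) /\ (forall i j, M i j = M j i) /\
  (forall i j k, M i k <= M i j + M j k).

Definition Mbar (n : nat) (M : 'M[R]_n) : R := \sum_(i < n) \sum_(j < n) M i j.
End Defs.

(* Main.v *)
Require Import Defs.
From HB Require Import structures.
From mathcomp Require Import all_boot all_order all_algebra.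
From mathcomp Require Import all_classical all_reals.
From mathcomp Require Import exp hoelder.
From mathcomp Require Import ring lra.
Import Order.TTheory GRing.Theory Num.Theory.
Local Open Scope ring_scope.

Section H.
Variable R : realType.

Lemma elem_le_sum (I : finType) (F : I -> R) i : (forall j, 0 <= F j) -> F i <= \sum_j F j.
Proof. by move=> h; rewrite (bigD1 i) //= lerDl sumr_ge0. Qed.

Arguments elem_le_sum {I F} i _.

Lemma powR_le_self (a p : R) : 0 <= a -> 1 <= p -> a `^ p <= 1 -> a `^ p <= a.
Proof.
move=> a0 p1 h; have [->|a_neq0] := eqVneq a 0.
  by rewrite powR0 // gt_eqF // (lt_le_trans ltr01 p1).
have a_gt0 : 0 < a by rewrite lt_neqAle eq_sym a_neq0.
have [a1|a1] := leP a 1; first by rewrite ge1r_powR // a_gt0 a1.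
have h2 := le1r_powR (ltW a1) p1.
by have := le_trans h2 h; rewrite leNgt a1.
Qed.

Lemma hoelder_seq (T : Type) (s : seq T) (x y : T -> R) (p q : R) :
  (forall i, 0 <= x i) -> (forall i, 0 <= y i) -> 0 < p -> 0 < q -> p^-1 + q^-1 = 1 ->
  \sum_(i <- s) x i * y i <=
    (\sum_(i <- s) x i `^ p) `^ p^-1 * (\sum_(i <- s) y i `^ q) `^ q^-1.
Proof.
move=> hx hy p0 q0 pq; elim: s => [|a s IH].
  by rewrite !big_nil mulr_ge0 // powR_ge0.
rewrite !big_cons.
set A := \sum_(i <- s) x i `^ p; set B := \sum_(i <- s) y i `^ q.
have A0 : 0 <= A by apply: sumr_ge0 => i _; exact: powR_ge0.
have B0 : 0 <= B by apply: sumr_ge0 => i _; exact: powR_ge0.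
apply: (le_trans (lerD (lexx _) IH)).
have := hoelder2 (hx a) (powR_ge0 A p^-1) (hy a) (powR_ge0 B q^-1) p0 q0 pq.
by rewrite -!powRrM !mulVf ?gt_eqF // !powRr1.
Qed.

Lemma jensen_seq (T : Type) (s : seq T) (w a : T -> R) (p : R) :
  1 <= p -> (forall i, 0 <= w i) -> (forall i, 0 <= a i) ->
  (\sum_(i <- s) w i * a i) `^ p <=
    (\sum_(i <- s) w i) `^ (p - 1) * \sum_(i <- s) w i * a i `^ p.
Proof.
move=> p1 hw ha.
have S0 : 0 <= \sum_(i <- s) w i * a i by apply: sumr_ge0 => i _; exact: mulr_ge0.
have W0 : 0 <= \sum_(i <- s) w i by apply: sumr_ge0 => i _; exact: hw.
have p0 : 0 < p := lt_le_trans ltr01 p1.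
have [->|pn1] := eqVneq p 1.
  rewrite subrr powRr0 mul1r powRr1 //.
  by rewrite le_eqVlt; apply/orP; left; apply/eqP; apply: eq_bigr => i _; rewrite powRr1.
have p1' : 1 < p by rewrite lt_neqAle eq_sym pn1 p1.
have pm0 : p - 1 != 0 by rewrite subr_eq0.
pose q := p / (p - 1).
have q0 : 0 < q by rewrite /q divr_gt0 // subr_gt0.
have pq : q^-1 + p^-1 = 1 by rewrite /q invf_div; field; rewrite gt_eqF.
have H := @hoelder_seq T s (fun i => w i `^ q^-1) (fun i => w i `^ p^-1 * a i) q p
  (fun i => powR_ge0 _ _) (fun i => mulr_ge0 (powR_ge0 _ _) (ha i)) q0 p0 pq.
have e1 : forall i, w i `^ q^-1 * (w i `^ p^-1 * a i) = w i * a i.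
  move=> i; rewrite mulrA -powRD; last by rewrite pq oner_eq0.
  by rewrite pq powRr1.
have e2 : forall i, (w i `^ q^-1) `^ q = w i.
  by move=> i; rewrite -powRrM mulVf ?gt_eqF // powRr1.
have e3 : forall i, (w i `^ p^-1 * a i) `^ p = w i * a i `^ p.
  by move=> i; rewrite powRM ?powR_ge0 // -powRrM mulVf ?gt_eqF // powRr1.
rewrite (eq_bigr _ (fun i _ => e1 i)) (eq_bigr _ (fun i _ => e2 i))
  (eq_bigr _ (fun i _ => e3 i)) in H.
have W1 : 0 <= \sum_(i <- s) w i * a i `^ p.
  by apply: sumr_ge0 => i _; rewrite mulr_ge0 // powR_ge0.
apply: (le_trans (ge0_ler_powR (ltW p0) _ _ H)); rewrite ?nnegrE //.
  by rewrite mulr_ge0 // powR_ge0.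
rewrite powRM ?powR_ge0 // -!powRrM mulVf ?gt_eqF // powRr1 //.
by rewrite /q invf_div divfK ?gt_eqF.
Qed.



Lemma glue n (M : 'M[R]_n) (p : R) (x y z : 'I_n -> R) (P1 P2 : 'M[R]_n) :
  1 <= p -> is_distance_matrix M ->
  (forall i, 0 <= x i) -> \sum_(i < n) x i `^ p = 1 -> \sum_(i < n) y i `^ p = 1 ->
  (forall i j, 0 <= P1 i j) -> (forall i, \sum_(j < n) P1 i j `^ p = x i `^ p) ->
  (forall j, \sum_(i < n) P1 i j `^ p = y j `^ p) ->
  (forall i j, 0 <= P2 i j) -> (forall i, \sum_(j < n) P2 i j `^ p = y i `^ p) ->
  (forall j, \sum_(i < n) P2 i j `^ p = z j `^ p) ->
  exists P : 'M[R]_n, [/\ (forall i j, 0 <= P i j),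
    (forall i, \sum_(j < n) P i j `^ p = x i `^ p),
    (forall j, \sum_(i < n) P i j `^ p = z j `^ p) &
    frob P M `^ p <= Mbar M `^ (p - 1) * (frob P1 M + frob P2 M)].
Proof.
move=> p1 [M0 [Mii [Msym Mtri]]] x0 hx1 hy1 P10 r1 c1 P20 r2 c2.
have p0 : 0 < p := lt_le_trans ltr01 p1.
pose b j := y j `^ p.
pose Q1 i j := P1 i j `^ p.
pose Q2 i j := P2 i j `^ p.
pose S i k := \sum_(j < n) Q1 i j * Q2 j k * (b j)^-1.
have Q10 : forall i j, 0 <= Q1 i j by move=> i j; exact: powR_ge0.
have Q20 : forall i j, 0 <= Q2 i j by move=> i j; exact: powR_ge0.
have b0 : forall j, 0 <= (b j)^-1 by move=> j; rewrite invr_ge0 powR_ge0.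
have T0 : forall i j k, 0 <= Q1 i j * Q2 j k * (b j)^-1.
  by move=> i j k; rewrite !mulr_ge0.
have S0 : forall i k, 0 <= S i k by move=> i k; apply: sumr_ge0 => j _.
have Q1z : forall i j, Q1 i j * ((\sum_(k < n) Q2 j k) * (b j)^-1) = Q1 i j.
  move=> i j; rewrite r2 -/(b j); have [bz|bnz] := eqVneq (b j) 0.
    have h := elem_le_sum i (fun i => Q10 i j).
    rewrite c1 -/(b j) bz in h.
    have -> : Q1 i j = 0 by apply/le_anti; rewrite h Q10.
    by rewrite mul0r.
  by rewrite divff // mulr1.
have Q2z : forall j k, (\sum_(i < n) Q1 i j) * (b j)^-1 * Q2 j k = Q2 j k.
  move=> j k; rewrite c1 -/(b j); have [bz|bnz] := eqVneq (b j) 0.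
    have h := elem_le_sum k (fun k => Q20 j k).
    rewrite r2 -/(b j) bz in h.
    have -> : Q2 j k = 0 by apply/le_anti; rewrite h Q20.
    by rewrite mulr0.
  by rewrite divff // mul1r.
have Q1le : forall i j, Q1 i j <= P1 i j.
  move=> i j; apply: powR_le_self => //.
  apply: (le_trans (elem_le_sum j (fun j => Q10 i j))); rewrite r1 -hx1.
  by apply: (elem_le_sum i (fun i => powR_ge0 _ _)).
have Q2le : forall i j, Q2 i j <= P2 i j.
  move=> i j; apply: powR_le_self => //.
  apply: (le_trans (elem_le_sum j (fun j => Q20 i j))); rewrite r2 -hy1.
  by apply: (elem_le_sum i (fun i => powR_ge0 _ _)).
have SP : forall i k, (S i k `^ p^-1) `^ p = S i k.
  by move=> i k; rewrite -powRrM mulVf ?gt_eqF // powRr1.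
exists (\matrix_(i, k) S i k `^ p^-1); split.
- by move=> i j; rewrite mxE powR_ge0.
- move=> i; under eq_bigr do rewrite mxE SP.
  rewrite /S exchange_big /= -r1; apply: eq_bigr => j _.
  rewrite -[RHS](Q1z i j) big_distrl big_distrr /=; apply: eq_bigr => k _; ring.
- move=> k; under eq_bigr do rewrite mxE SP.
  rewrite /S exchange_big /= -c2; apply: eq_bigr => j _.
  rewrite -[RHS](Q2z j k) !big_distrl /=; apply: eq_bigr => i _; ring.
have key : \sum_i \sum_k M i k * S i k <= frob P1 M + frob P2 M.
  pose T i j k := Q1 i j * Q2 j k * (b j)^-1.
  apply: (@le_trans _ _ (\sum_i \sum_k \sum_j (M i j + M j k) * T i j k)).
    apply: ler_sum => i _; apply: ler_sum => k _; rewrite /S big_distrr /=.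
    apply: ler_sum => j _; rewrite /T; apply: ler_wpM2r; [exact: T0 | exact: Mtri].
  have eS : \sum_i \sum_k \sum_j (M i j + M j k) * T i j k =
     \sum_i \sum_k \sum_j M i j * T i j k + \sum_i \sum_k \sum_j M j k * T i j k.
    rewrite -big_split; apply: eq_bigr => i _; rewrite -big_split.
    apply: eq_bigr => k _; rewrite -big_split; apply: eq_bigr => j _.
    by rewrite mulrDl.
  have eA : \sum_i \sum_k \sum_j M i j * T i j k = \sum_i \sum_j M i j * Q1 i j.
    apply: eq_bigr => i _; rewrite exchange_big; apply: eq_bigr => j _ /=.
    rewrite -[in RHS](Q1z i j) big_distrl !big_distrr /=; apply: eq_bigr => k _.
    rewrite /T; ring.
  have eB : \sum_i \sum_k \sum_j M j k * T i j k = \sum_j \sum_k M j k * Q2 j k.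
    rewrite exchange_big /=; under eq_bigr do rewrite exchange_big /=.
    rewrite exchange_big /=; apply: eq_bigr => j _; apply: eq_bigr => k _.
    rewrite -[in RHS](Q2z j k) !big_distrl !big_distrr /=; apply: eq_bigr => i _.
    rewrite /T; ring.
  rewrite eS eA eB /frob; apply: lerD; apply: ler_sum => i _; apply: ler_sum => j _;
    rewrite [X in X <= _]mulrC; apply: ler_wpM2r => //.
have jen : frob (\matrix_(i, k) S i k `^ p^-1) M `^ p <=
    Mbar M `^ (p - 1) * \sum_i \sum_k M i k * S i k.
  rewrite /frob /Mbar.
  under eq_bigr do under eq_bigr do rewrite mxE mulrC.
  rewrite !pair_big /=.
  have := @jensen_seq _ (index_enum _) (fun u : 'I_n * 'I_n => M u.1 u.2)
    (fun u => S u.1 u.2 `^ p^-1) p p1 (fun u => M0 _ _) (fun u => powR_ge0 _ _).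
  move=> h; apply: (le_trans h); rewrite le_eqVlt; apply/orP; left; apply/eqP.
  by congr (_ * _); apply: eq_bigr => u _; rewrite SP.
apply: (le_trans jen); apply: ler_wpM2l; first exact: powR_ge0.
exact: key.
Qed.

End H.

Local Open Scope classical_set_scope.

Theorem proposition1 (R : realType) (n : nat) (t : R) (M : 'M[R]_n) :
  t <= 1 -> is_distance_matrix M ->
  forall x y z : 'I_n -> R,
    co_simplex t x -> co_simplex t y -> co_simplex t z ->
    measured_cost t M x z `^ (2 - t) <=
      Mbar M `^ (1 - t) * (measured_cost t M x y + measured_cost t M y z).
Proof.
move=> t1 hM x y z [x0 hx] [y0 hy] [z0 hz].
have hp : 1 / tstar t = 2 - t by rewrite /tstar !div1r invrK.
rewrite hp in hx hy hz.
have -> : 1 - t = (2 - t) - 1 by ring.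
have p1 : 1 <= 2 - t by lra.
have p0 : 0 < 2 - t by lra.
have M0 : forall i j, 0 <= M i j by case: hM.
have frob0 : forall P : 'M[R]_n, (forall i j, 0 <= P i j) -> 0 <= frob P M.
  by move=> P P0; apply: sumr_ge0 => i _; apply: sumr_ge0 => j _; rewrite mulr_ge0.
have ne : forall r c : 'I_n -> R, (forall i, 0 <= r i) -> (forall i, 0 <= c i) ->
    \sum_i r i `^ (2 - t) = 1 -> \sum_i c i `^ (2 - t) = 1 ->
    [set frob P M | P in co_polytope t r c] !=set0.
  move=> r c r0 c0 hr hc; exists (frob (\matrix_(i, j) (r i * c j)) M).
  exists (\matrix_(i, j) (r i * c j)) => //; rewrite /co_polytope hp /=; split.
    by move=> i j; rewrite mxE mulr_ge0.
  split.
    move=> i; under eq_bigr do rewrite mxE powRM //.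
    by rewrite -big_distrr /= hc mulr1.
  move=> j; under eq_bigr do rewrite mxE powRM //.
  by rewrite -big_distrl /= hr mul1r.
have lb : forall r c, has_lbound [set frob P M | P in co_polytope t r c].
  move=> r c; exists 0 => _ [P [P0 _] <-]; exact: frob0.
set D := measured_cost t M x z.
have D0 : 0 <= D.
  apply: lb_le_inf; first exact: ne.
  by move=> _ [P [P0 _] <-]; exact: frob0.
have main : forall P1 P2, co_polytope t x y P1 -> co_polytope t y z P2 ->
    D `^ (2 - t) <= Mbar M `^ ((2 - t) - 1) * (frob P1 M + frob P2 M).
  move=> P1 P2; rewrite /co_polytope hp /= => -[P10 [r1 c1]] [P20 [r2 c2]].
  have [P [P0 rP cP hP]] := @glue R _ _ _ _ _ _ _ _ p1 hM x0 hx hy P10 r1 c1 P20 r2 c2.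
  apply: le_trans hP; apply: ge0_ler_powR; rewrite ?nnegrE //; first lra.
    exact: frob0.
  apply: ge_inf; first exact: lb.
  by exists P => //; rewrite /co_polytope hp.
set K := Mbar M `^ ((2 - t) - 1).
have K0 : 0 <= K by exact: powR_ge0.
apply/ler_addgt0Pr => e e0.
pose eps := e / (2 * K + 1).
have eps0 : 0 < eps by rewrite /eps divr_gt0 //; lra.
have heps : eps * (2 * K + 1) = e by rewrite /eps divfK //; lra.
have [_ [P1 hP1 <-] f1] := inf_adherent eps0 (conj (ne _ _ x0 y0 hx hy) (lb x y)).
have [_ [P2 hP2 <-] f2] := inf_adherent eps0 (conj (ne _ _ y0 z0 hy hz) (lb y z)).
have := main _ _ hP1 hP2.
have h1 : K * (frob P1 M + frob P2 M) <=
   K * (measured_cost t M x y + measured_cost t M y z + 2 * eps).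
  by apply: ler_wpM2l => //; rewrite /measured_cost; lra.
move=> h.
have h2 : K * (measured_cost t M x y + measured_cost t M y z + 2 * eps) =
  K * (measured_cost t M x y + measured_cost t M y z) + (e - eps) by rewrite -heps; ring.
rewrite -/K in h; lra.
Qed.
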